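(* In the continuous Donation Game, for every $\gamma\in\mathbb{R}$ there do not exist a bounded measurable $\psi:[0,K]\to\mathbb{R}$, a probability measure $\sigma_X^0$ on $[0,K]$ and a Markov kernel $\sigma_X[x,y]$ from $[0,K]^2$ to $[0,K]$ such that for all $x,y\in[0,K]$, $$u_X(x,y)-\gamma=\psi(x)-\lambda\int\psi(s)\,d\sigma_X[x,y](s)-(1-\lambda)\int\psi(s)\,d\sigma_X^0(s).$$
   Context: Continuous Donation Game: fix $K>0$ and measurable nondecreasing functions $b,c:[0,K]\to\mathbb{R}$ with $b(0)=c(0)=0$ and $b(s)>c(s)$ for $s>0$. Action spaces $S_X=S_Y=[0,K]$, payoffs $u_X(x,y)=b(y)-c(x)$, $u_Y(x,y)=b(x)-c(y)$, discount factor $\lambda\in(0,1)$. *)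

(* Defs.v *)
From Stdlib Require Import Reals List Classical ClassicalEpsilon.
Open Scope R_scope.

Definition is_sigma_algebra {T : Type} (F : (T -> Prop) -> Prop) : Prop :=
  F (fun _ => True) /\
  (forall A, F A -> F (fun t => ~ A t)) /\
  (forall A : nat -> T -> Prop, (forall n, F (A n)) -> F (fun t => exists n, A n t)).

Definition borel (A : R -> Prop) : Prop :=
  forall F : (R -> Prop) -> Prop, is_sigma_algebra F ->
    (forall a, F (fun x => x <= a)) -> F A.

(* Borel sets of R^2: generated by the half-planes {x <= a} and {y <= a}
   (this is the product Borel sigma-algebra). *)
Definition borel2 (A : R * R -> Prop) : Prop :=
  forall F : (R * R -> Prop) -> Prop, is_sigma_algebra F ->
    (forall a, F (fun p => fst p <= a)) ->
    (forall a, F (fun p => snd p <= a)) -> F A.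

Definition in0K (K s : R) : Prop := 0 <= s <= K.

Definition measurable_on (K : R) (f : R -> R) : Prop :=
  forall a, borel (fun s => in0K K s /\ f s <= a).

Definition measurable2_on (K : R) (g : R -> R -> R) : Prop :=
  forall a, borel2 (fun p => in0K K (fst p) /\ in0K K (snd p) /\ g (fst p) (snd p) <= a).

Definition bounded_on (K : R) (f : R -> R) : Prop :=
  exists M, forall s, in0K K s -> Rabs (f s) <= M.

Definition nondecreasing_on (K : R) (f : R -> R) : Prop :=
  forall s t, in0K K s -> in0K K t -> s <= t -> f s <= f t.

Definition prob_measure_on (K : R) (mu : (R -> Prop) -> R) : Prop :=
  (forall A, borel A -> 0 <= mu A) /\
  (forall A : nat -> R -> Prop,
      (forall n, borel (A n)) ->
      (forall n m s, A n s -> A m s -> n = m) ->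
      infinite_sum (fun n => mu (A n)) (mu (fun s => exists n, A n s))) /\
  mu (fun _ => True) = 1 /\
  mu (in0K K) = 1.

Definition markov_kernel_on (K : R) (k : R -> R -> (R -> Prop) -> R) : Prop :=
  (forall x y, in0K K x -> in0K K y -> prob_measure_on K (k x y)) /\
  (forall A, borel A -> measurable2_on K (fun x y => k x y A)).

(* simple functions: finite lists of (coefficient, Borel set) *)
Definition indicator (A : R -> Prop) (s : R) : R :=
  if excluded_middle_informative (A s) then 1 else 0.

Definition simple_eval (l : list (R * (R -> Prop))%type) (s : R) : R :=
  fold_right (fun p acc => fst p * indicator (snd p) s + acc) 0 l.

Definition simple_int (mu : (R -> Prop) -> R) (l : list (R * (R -> Prop))%type) : R :=
  fold_right (fun p acc => fst p * mu (snd p) + acc) 0 l.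

(* Lebesgue integral of f over [0,K] w.r.t. mu (for bounded measurable f):
   the supremum of the integrals of Borel simple functions below f on [0,K]. *)
Definition integral_is (K : R) (mu : (R -> Prop) -> R) (f : R -> R) (v : R) : Prop :=
  is_lub (fun r => exists l : list (R * (R -> Prop))%type,
             Forall (fun p => borel (snd p)) l /\
             (forall s, in0K K s -> simple_eval l s <= f s) /\
             r = simple_int mu l) v.

(* Main.v *)
Require Import Defs.
From Stdlib Require Import Reals List Classical ClassicalEpsilon Lra Lia.
From Stdlib Require Import FunctionalExtensionality PropExtensionality.
Open Scope R_scope.

Lemma setext (A B : R -> Prop) : (forall s, A s <-> B s) -> A = B.
Proof. intro H. extensionality s. apply propositional_extensionality, H. Qed.

Lemma borel_ext A B : borel A -> (forall s, A s <-> B s) -> borel B.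
Proof. intros HA H. rewrite <- (setext A B H). exact HA. Qed.

Lemma borelT : borel (fun _ => True).
Proof. intros F HF _. apply HF. Qed.

Lemma borelC A : borel A -> borel (fun t => ~ A t).
Proof. intros HA F HF Hg. apply HF. apply HA; auto. Qed.

Lemma borelU (A : nat -> R -> Prop) : (forall n, borel (A n)) -> borel (fun t => exists n, A n t).
Proof. intros HA F HF Hg. apply HF. intro n. apply HA; auto. Qed.

Lemma borelI A B : borel A -> borel B -> borel (fun s => A s /\ B s).
Proof.
  intros HA HB.
  set (C := fun n : nat => match n with 0%nat => fun t => ~ A t | _ => fun t => ~ B t end).
  apply (borel_ext (fun t => ~ exists n, C n t)).
  - apply borelC, borelU. intros [|n]; simpl; apply borelC; auto.
  - intro s; split.
    + intro H. split; apply NNPP; intro H'; apply H.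
      exists 0%nat; exact H'. exists 1%nat; exact H'.
    + intros [H1 H2] [[|n] Hn]; simpl in Hn; tauto.
Qed.

Lemma borel_in0K K : borel (in0K K).
Proof.
  apply (borel_ext (fun s => (~ exists n, s <= - / INR (S n)) /\ s <= K)).
  - apply borelI. apply borelC, borelU. intro n. intros F HF Hg. apply Hg.
    intros F HF Hg. apply Hg.
  - intro s. unfold in0K. split.
    + intros [H1 H2]. split; auto. destruct (Rle_or_lt 0 s) as [h|h]; auto.
      exfalso. apply H1. destruct (archimed_cor1 (- s)) as [N [HN1 HN2]]; [lra|].
      exists (pred N). rewrite Nat.succ_pred_pos by auto. lra.
    + intros [H1 H2]; split; auto. intros [n Hn].
      assert (0 < / INR (S n)). { apply Rinv_0_lt_compat, lt_0_INR. lia. }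
      lra.
Qed.

Lemma borel0 : borel (fun _ => False).
Proof. apply (borel_ext (fun t => ~ True)). apply borelC, borelT. tauto. Qed.

Lemma sum_lim_const (f : nat -> R) (p l : R) :
  infinite_sum f l -> (forall n, sum_f_R0 f (S n) = p) -> l = p.
Proof.
  intros H Hs. destruct (Req_dec l p) as [h|h]; auto. exfalso.
  destruct (H (Rabs (l - p))) as [N HN].
  { apply Rabs_pos_lt. lra. }
  specialize (HN (S N) ltac:(lia)). rewrite Hs in HN.
  unfold Rdist in HN. rewrite <- Rabs_Ropp in HN.
  replace (- (p - l)) with (l - p) in HN by ring. lra.
Qed.

Lemma mu_empty K mu : prob_measure_on K mu -> mu (fun _ => False) = 0.
Proof.
  intros [Hpos [Hadd _]].
  specialize (Hadd (fun _ => fun _ => False) (fun _ => borel0)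
     ltac:(intros; contradiction)).
  cbv beta in Hadd.
  assert (E : mu (fun s : R => exists n : nat, False) = mu (fun _ => False)).
  { f_equal. apply setext. intro s; split; [intros [_ h]; exact h | tauto]. }
  rewrite E in Hadd.
  set (a := mu (fun _ => False)) in *.
  destruct (Req_dec a 0) as [h|h]; auto. exfalso.
  destruct (Hadd (Rabs a / 2)) as [N HN]. { pose proof (Rabs_pos_lt a h). lra. }
  pose proof (HN N ltac:(lia)) as H1. pose proof (HN (S N) ltac:(lia)) as H2.
  simpl in H2. unfold Rdist in *.
  set (u := sum_f_R0 (fun _ : nat => a) N) in *.
  assert (Rabs a <= Rabs (u + a - a) + Rabs (u - a)).
  { replace a with ((u + a - a) - (u - a)) at 1 by ring.
    eapply Rle_trans; [apply Rabs_triang|]. rewrite Rabs_Ropp. lra. }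
  lra.
Qed.

Lemma mu_add2 K mu X Y : prob_measure_on K mu -> borel X -> borel Y ->
  mu X = mu (fun s => X s /\ Y s) + mu (fun s => X s /\ ~ Y s).
Proof.
  intros Hmu HX HY. pose proof (mu_empty K mu Hmu) as H0.
  destruct Hmu as [Hpos [Hadd _]].
  set (A := fun n : nat => match n with 0%nat => fun s => X s /\ Y s
           | 1%nat => fun s => X s /\ ~ Y s | _ => fun _ => False end).
  specialize (Hadd A).
  assert (Hb : forall n, borel (A n)).
  { intros [|[|n]]; simpl. apply borelI; auto. apply borelI; auto; apply borelC; auto.
    apply borel0. }
  assert (Hd : forall n m s, A n s -> A m s -> n = m).
  { intros [|[|n]] [|[|m]] s; simpl; tauto. }
  specialize (Hadd Hb Hd).
  assert (E : mu (fun s => exists n, A n s) = mu X).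
  { f_equal. apply setext. intro s; split.
    - intros [[|[|n]] Hn]; simpl in Hn; tauto.
    - intro h. destruct (classic (Y s)). exists 0%nat; simpl; tauto.
      exists 1%nat; simpl; tauto. }
  rewrite E in Hadd.
  apply (sum_lim_const _ _ _ Hadd).
  induction n. simpl. ring. simpl in *. rewrite IHn. rewrite H0. ring.
Qed.

Definition intB (mu : (R -> Prop) -> R) (B : R -> Prop) (l : list (R * (R -> Prop))%type) : R :=
  fold_right (fun p acc => fst p * mu (fun s => snd p s /\ B s) + acc) 0 l.

Lemma mu_ext (mu : (R -> Prop) -> R) A B : (forall s, A s <-> B s) -> mu A = mu B.
Proof. intro H; f_equal; apply setext; auto. Qed.

Lemma split_int K mu l : prob_measure_on K mu -> Forall (fun p => borel (snd p)) l ->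
  forall B Y, borel B -> borel Y ->
  intB mu B l = intB mu (fun s => B s /\ Y s) l + intB mu (fun s => B s /\ ~ Y s) l.
Proof.
  intros Hmu Hl B Y HB HY. induction Hl as [|[a A] l HA Hl IH]; simpl. ring.
  simpl in HA. rewrite IH.
  rewrite (mu_add2 K mu (fun s => A s /\ B s) Y Hmu (borelI _ _ HA HB) HY).
  rewrite (mu_ext mu (fun s => (A s /\ B s) /\ Y s) (fun s => A s /\ B s /\ Y s)) by tauto.
  rewrite (mu_ext mu (fun s => (A s /\ B s) /\ ~ Y s) (fun s => A s /\ B s /\ ~ Y s)) by tauto.
  ring.
Qed.

Lemma main_bound K mu l : prob_measure_on K mu -> Forall (fun p => borel (snd p)) l ->
  forall B M, borel B -> (forall s, in0K K s -> B s -> simple_eval l s <= M) ->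
  intB mu B l <= M * mu B.
Proof.
  intros Hmu Hl. pose proof Hmu as [Hpos [_ [H1 H2]]].
  induction Hl as [|[a A] l HA Hl IH]; intros B M HB H; simpl in *.
  - destruct (classic (exists s, in0K K s /\ B s)) as [[s [h1 h2]]|hn].
    + specialize (H s h1 h2). pose proof (Hpos B HB). nra.
    + assert (mu B = 0).
      { rewrite (mu_add2 K mu B (in0K K) Hmu HB (borel_in0K K)).
        rewrite (mu_ext mu (fun s => B s /\ in0K K s) (fun _ => False))
          by (intro s; split; [intros [p q]; apply hn; eauto | tauto]).
        rewrite (mu_empty K mu Hmu).
        pose proof (mu_add2 K mu (fun _ => True) (in0K K) Hmu borelT (borel_in0K K)) as E.
        cbv beta in E; rewrite (mu_ext mu (fun s => True /\ in0K K s) (in0K K)) in E by tauto.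
        rewrite (mu_add2 K mu (fun s => True /\ ~ in0K K s) B Hmu) in E.
        2: apply borelI; [apply borelT | apply borelC, borel_in0K].
        2: exact HB.
        rewrite (mu_ext mu (fun s => (True /\ ~ in0K K s) /\ B s) (fun s => B s /\ ~ in0K K s)) in E by tauto.
        assert (0 <= mu (fun s => B s /\ ~ in0K K s)) by
          (apply Hpos; apply borelI; auto; apply borelC, borel_in0K).
        assert (0 <= mu (fun s => (True /\ ~ in0K K s) /\ ~ B s)) by
          (apply Hpos; apply borelI; [apply borelI|apply borelC]; auto;
           [apply borelT | apply borelC, borel_in0K]).
        lra. }
      rewrite H0. lra.
  - rewrite (split_int K mu l Hmu Hl B A HB HA).
    pose proof (IH (fun s => B s /\ A s) (M - a) (borelI _ _ HB HA)) as I1.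
    pose proof (IH (fun s => B s /\ ~ A s) M (borelI _ _ HB (borelC _ HA))) as I2.
    assert (E1 : forall s, in0K K s -> B s -> A s -> simple_eval l s <= M - a).
    { intros s h1 h2 h3. specialize (H s h1 h2). unfold indicator at 1 in H.
      destruct (excluded_middle_informative (A s)); [lra|contradiction]. }
    assert (E2 : forall s, in0K K s -> B s -> ~ A s -> simple_eval l s <= M).
    { intros s h1 h2 h3. specialize (H s h1 h2). unfold indicator at 1 in H.
      destruct (excluded_middle_informative (A s)); [contradiction|lra]. }
    specialize (I1 ltac:(intros s h [p q]; auto)).
    specialize (I2 ltac:(intros s h [p q]; auto)).
    rewrite (mu_add2 K mu B A Hmu HB HA).
    rewrite (mu_ext mu (fun s => A s /\ B s) (fun s => B s /\ A s)) by tauto.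
    lra.
Qed.

Lemma intB_T mu l : intB mu (fun _ => True) l = simple_int mu l.
Proof.
  induction l as [|[a A] l IH]; simpl; auto.
  rewrite IH. rewrite (mu_ext mu (fun s => A s /\ True) A) by tauto. reflexivity.
Qed.

Lemma int_bounds K mu f v m M : prob_measure_on K mu ->
  (forall s, in0K K s -> m <= f s <= M) -> integral_is K mu f v -> m <= v <= M.
Proof.
  intros Hmu Hf [Hub Hlub]. pose proof Hmu as [_ [_ [HT _]]]. split.
  - apply Hub. exists ((m, fun _ => True) :: nil). repeat split.
    + constructor; [apply borelT | constructor].
    + intros s hs. simpl. unfold indicator.
      destruct (excluded_middle_informative True); [|tauto].
      specialize (Hf s hs). lra.
    + simpl. rewrite HT. ring.
  - apply Hlub. intros r [l [Hl [Hle ->]]].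
    rewrite <- intB_T.
    pose proof (main_bound K mu l Hmu Hl (fun _ => True) M borelT) as H.
    rewrite HT in H. cut (intB mu (fun _ => True) l <= M * 1). lra.
    apply H. intros s hs _. specialize (Hle s hs). specialize (Hf s hs). lra.
Qed.

Theorem mainTheorem15
  (K : R) (b c : R -> R) (lam : R)
  (HK : 0 < K)
  (Hbm : measurable_on K b) (Hcm : measurable_on K c)
  (Hbmon : nondecreasing_on K b) (Hcmon : nondecreasing_on K c)
  (Hb0 : b 0 = 0) (Hc0 : c 0 = 0)
  (Hbc : forall s, 0 < s <= K -> b s > c s)
  (Hlam : 0 < lam < 1) :
  forall gamma : R,
    ~ (exists (psi : R -> R) (sigma0 : (R -> Prop) -> R)
              (sigma : R -> R -> (R -> Prop) -> R),
          bounded_on K psi /\ measurable_on K psi /\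
          prob_measure_on K sigma0 /\ markov_kernel_on K sigma /\
          exists I0 : R, integral_is K sigma0 psi I0 /\
          forall x y, in0K K x -> in0K K y ->
            exists Ixy : R, integral_is K (sigma x y) psi Ixy /\
              (b y - c x) - gamma = psi x - lam * Ixy - (1 - lam) * I0).
Proof.
  intros gamma [psi [sigma0 [sigma [[Mb HMb] [_ [_ [[Hk _] [I0 [_ Heq]]]]]]]]].
  assert (h0 : in0K K 0) by (unfold in0K; lra).
  assert (hK : in0K K K) by (unfold in0K; lra).
  destruct (completeness (fun r => exists s, in0K K s /\ r = psi s)) as [M [HM1 HM2]].
  { exists Mb. intros r [s [hs ->]]. specialize (HMb s hs).
    pose proof (Rle_abs (psi s)); pose proof (Rle_abs (- psi s)); rewrite Rabs_Ropp in *; lra. }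
  { exists (psi 0); eauto. }
  destruct (completeness (fun r => exists s, in0K K s /\ r = - psi s)) as [m' [Hm1 Hm2]].
  { exists Mb. intros r [s [hs ->]]. specialize (HMb s hs).
    pose proof (Rle_abs (psi s)); pose proof (Rle_abs (- psi s)); rewrite Rabs_Ropp in *; lra. }
  { exists (- psi 0); eauto. }
  set (m := - m').
  assert (Hpsi : forall s, in0K K s -> m <= psi s <= M).
  { intros s hs. split.
    - assert (- psi s <= m') by (apply Hm1; eauto). unfold m; lra.
    - apply HM1; eauto. }
  set (d := b K - c K).
  assert (Hd : d > 0) by (unfold d; specialize (Hbc K ltac:(lra)); lra).
  set (eps := d / 4).
  assert (exists x, in0K K x /\ psi x > M - eps) as [x [hx Hx]].
  { apply NNPP; intro hn. assert (M <= M - eps).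
    { apply HM2. intros r [s [hs ->]]. apply Rnot_lt_le. intro h. apply hn.
      exists s; split; auto. }
    unfold eps in *; lra. }
  assert (exists x, in0K K x /\ psi x < m + eps) as [x' [hx' Hx']].
  { apply NNPP; intro hn. assert (m' <= m' - eps).
    { apply Hm2. intros r [s [hs ->]]. apply Rnot_lt_le. intro h. apply hn.
      exists s; split; auto. unfold m in *. lra. }
    unfold eps in *; lra. }
  destruct (Heq x 0 hx h0) as [I1 [HI1 E1]].
  destruct (Heq x' K hx' hK) as [I2 [HI2 E2]].
  pose proof (int_bounds K _ psi I1 m M (Hk x 0 hx h0) Hpsi HI1) as B1.
  pose proof (int_bounds K _ psi I2 m M (Hk x' K hx' hK) Hpsi HI2) as B2.
  assert (c x >= 0) by (rewrite <- Hc0; apply Rle_ge, Hcmon; auto; destruct hx; lra).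
  assert (c x' <= c K) by (apply Hcmon; auto; destruct hx'; lra).
  assert (lam * (I2 - I1) >= lam * (m - M)) by (apply Rle_ge, Rmult_le_compat_l; lra).
  assert ((1 - lam) * (m - M) <= 0).
  { pose proof (Hpsi 0 h0). unfold m in *; nra. }
  unfold eps, d in *. lra.
Qed.
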